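(* Let $\mathbf{p}:[0,1]\to[0,1]^E$, $\lambda\mapsto\mathbf{p}(\lambda)$, be continuous, and set $\rho(\lambda):=\rho\big(B^T\mathrm{diag}(\mathbf{p}(\lambda))\big)$. Suppose a continuous phase transition occurs at $\lambda_c\in[0,1)$, i.e. $\mathbf{Q}(\mathbf{p}(\lambda))\to\mathbf{1}$ as $\lambda\to\lambda_c$, and there is a sequence $\lambda_n\to\lambda_c$ with $\mathbf{Q}(\mathbf{p}(\lambda_n))\neq\mathbf{1}$ for all $n$. Then $\rho(\lambda_c)\geq 1$.
   Context: $\mathcal{G}=(V,E)$ is a finite directed graph, edges written $i\to j$, $M=|E|$; $\mathcal{N}^-(j)=\{k:\,k\to j\in E\}$ is the set of predecessors of $j$. The Hashimoto matrix is $B_{i\to j,\,k\to l}=\delta_{jk}(1-\delta_{il})$, $\rho$ denotes spectral radius. For $\mathbf{p}\in[0,1]^E$ define $\mathbf{F}(\cdot;\mathbf{p}):[0,1]^E\to[0,1]^E$ componentwise: for the edge $j\to i$, $$F_{j\to i}(\mathbf{y};\mathbf{p})=\prod_{k\in\mathcal{N}^-(j)\setminus\{i\}}\big(1-p_{k\to j}+p_{k\to j}\,y_{k\to j}\big)$$ (empty product $=1$). One checks that the Jacobian at $\mathbf{1}$ is $\mathbf{F}'(\mathbf{1};\mathbf{p})=B^T\mathrm{diag}(\mathbf{p})$. $\mathbf{Q}(\mathbf{p})\in[0,1]^E$ denotes the componentwise smallest fixed point of $\mathbf{F}(\cdot;\mathbf{p})$ in $[0,1]^E$ (the limit of the iterates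 of $\mathbf{F}$ started at $\mathbf{0}$); its component for edge $j\to i$ is the message-passing probability that the cluster obtained by backtracking the edge $j\to i$ is finite. *)

(* Defs.v *)
From HB Require Import structures.
From mathcomp Require Import all_boot all_order all_algebra.
From mathcomp Require Import all_classical all_reals all_analysis.
From mathcomp Require Import complex.
Set Implicit Arguments. Unset Strict Implicit. Unset Printing Implicit Defensive.
Import Order.TTheory GRing.Theory Num.Theory.
Import numFieldNormedType.Exports.
Local Open Scope ring_scope.
Local Open Scope classical_set_scope.

(* A finite directed graph: vertex type V, edge set E : {set V * V};
   the pair (i, j) is the edge i -> j.  Edges are indexed by 'I_#|E|
   through enum_val. *)

Section Graph.
Variables (V : finType) (E : {set V * V}).

Definition edge (a : 'I_#|E|) : V * V := enum_val a.
Definition esrc (a : 'I_#|E|) : V := (edge a).1.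
Definition edst (a : 'I_#|E|) : V := (edge a).2.

Definition hashimoto (R : nzRingType) : 'M[R]_#|E| :=
  \matrix_(a, b) ((edst a == esrc b) && (esrc a != edst b))%:R.

Variable R : realType.

(* F(y; p) : for the edge j -> i,
   F_{j->i}(y) = prod_{k in N^-(j) \ {i}} (1 - p_{k->j} + p_{k->j} y_{k->j}),
   the product ranging over edges k -> j with k <> i. *)
Definition Fmap (p : 'I_#|E| -> R) (y : 'I_#|E| -> R) : 'I_#|E| -> R :=
  fun a => \prod_(b < #|E| | (edst b == esrc a) && (esrc b != edst a))
             (1 - p b + p b * y b).

Definition Qmp (p : 'I_#|E| -> R) : 'I_#|E| -> R :=
  fun a => lim ((fun n : nat => iter n (Fmap p) (fun _ => 0) a) @ \oo).

End Graph.

(* Spectral radius of a real square matrix: the largest modulus of its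
   complex eigenvalues (sup of the finite set of moduli; 0 for the empty
   matrix). *)
Definition spectral_radius (R : realType) (n : nat) (A : 'M[R]_n) : R :=
  sup [set r : R | exists z : R[i],
         eigenvalue (map_mx (fun x : R => (x%:C)%C) A) z
         /\ r = ComplexField.Normc.normc z].

Definition jac (V : finType) (E : {set V * V}) (R : realType)
  (p : 'I_#|E| -> R) : 'M[R]_#|E| :=
  (hashimoto E R)^T *m diag_mx (\row_a p a).

(* Main.v *)
Require Import Defs.
From HB Require Import structures.
From mathcomp Require Import all_boot all_order all_algebra.
From mathcomp Require Import all_classical all_reals all_analysis.
From mathcomp Require Import complex.
From mathcomp Require Import ring lra.
Import Order.TTheory GRing.Theory Num.Theory.
Import numFieldNormedType.Exports.
Local Open Scope ring_scope.
Local Open Scope classical_set_scope.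
Section LinAlg.
Variables (R : realType) (n : nat) (A : 'M[R]_n).
Hypothesis A0 : forall i j, 0 <= A i j.

Definition Av (y : 'I_n -> R) i := \sum_j A i j * y j.
Definition Pt (t : R) := forall y : 'I_n -> R,
  (forall i, Av y i <= t * y i) -> forall i, 0 <= y i.
Definition Ut (t : R) := forall c : 'I_n -> R,
  exists y : 'I_n -> R, forall i, t * y i - Av y i = c i.

Lemma Av_lin (y z : 'I_n -> R) (k : R) i :
  Av (fun j => y j + k * z j) i = Av y i + k * Av z i.
Proof.
rewrite /Av big_distrr -big_split /=; apply: eq_bigr => j _.
by rewrite mulrDr mulrCA.
Qed.

Lemma Av_le (y z : 'I_n -> R) i :
  (forall j, y j <= z j) -> Av y i <= Av z i.
Proof. by move=> H; apply: ler_sum => j _; apply: ler_wpM2l. Qed.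

Lemma Av_ge0 (y : 'I_n -> R) i : (forall j, 0 <= y j) -> 0 <= Av y i.
Proof. by move=> H; apply: sumr_ge0 => j _; apply: mulr_ge0. Qed.

Definition Ksum := \sum_i \sum_j A i j.

Lemma L1 t : Ksum < t -> 0 < t -> Pt t.
Proof.
move=> Kt t0 y H i; rewrite leNgt; apply/negP => yi.
case: (arg_minP y (P:=predT) (i0:=i) isT) => m _ Hm.
have ym : y m < 0 by apply: le_lt_trans (Hm i isT) yi.
have H1 : (\sum_j A m j) * y m <= Av y m.
  rewrite /Av big_distrl /=; apply: ler_sum => j _.
  by apply: ler_wpM2l => //; apply: Hm.
have H2 : \sum_j A m j <= Ksum.
  rewrite /Ksum [X in _ <= X](bigD1 m) //= lerDl; apply: sumr_ge0 => k _.
  by apply: sumr_ge0.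
have := H m; set s := \sum_j A m j in H1 H2 => H3.
nra.
Qed.

Lemma L2 t1 : (forall s, t1 < s -> Pt s) -> Ut t1 -> Pt t1.
Proof.
move=> HP HU y H k; rewrite leNgt; apply/negP => yk.
have [v Hv] := HU (fun _ => 1).
have nv := normr_ge0 (v k).
pose e := - y k / (2 * (`|v k| + 1)).
have he : e * (2 * (`|v k| + 1)) = - y k by rewrite /e; field; lra.
have e0 : 0 < e by rewrite /e divr_gt0 //; lra.
pose M := \sum_i (`|y i| + e * `|v i|).
have M0 : 0 <= M by apply: sumr_ge0 => i _; apply: addr_ge0 => //; apply: mulr_ge0 => //; exact: ltW.
pose d := e / (M + 1).
have hd : d * (M + 1) = e by rewrite /d; field; lra.
have d0 : 0 < d by rewrite /d divr_gt0 //; lra.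
have Hz := HP (t1 + d) ltac:(lra) (fun j => y j + e * v j).
have : 0 <= y k + e * v k.
  apply: Hz => i; rewrite Av_lin.
  have Hi := H i; have Hvi := Hv i.
  have zi : `|y i + e * v i| <= M.
    apply: le_trans (ler_normD _ _) _.
    rewrite normrM (gtr0_norm e0) /M (bigD1 i) //= lerDl.
    by apply: sumr_ge0 => j _; apply: addr_ge0 => //; apply: mulr_ge0 => //; exact: ltW.
  have : - `|y i + e * v i| <= y i + e * v i by rewrite lerNl -normrN ler_norm.
  nra.
have : v k <= `|v k| by apply: ler_norm.
have : 0 <= `|v k| by [].
nra.
Qed.

Lemma L3 t1 : 0 < t1 -> Ut t1 -> Pt t1 ->
  exists2 eta, 0 < eta & forall s, t1 - eta < s <= t1 -> Pt s.
Proof.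
move=> t0 HU HP.
have [v Hv] := HU (fun _ => 1).
have v0 : forall i, 0 <= v i.
  by apply: HP => i; have := Hv i; lra.
have vp : forall i, 0 < v i.
  move=> i; have := Hv i; have := Av_ge0 v i v0; move=> h1 h2.
  have : 1 <= t1 * v i by lra.
  move=> h3; nra.
have [u Hu] := HU v.
have u0 : forall i, 0 <= u i.
  by apply: HP => i; have := Hu i; have := v0 i; lra.
pose K := \sum_i u i / v i.
have K0 : 0 <= K by apply: sumr_ge0 => i _; apply: divr_ge0.
have Ki : forall i, u i <= K * v i.
  move=> i; rewrite -ler_pdivrMr //.
  by rewrite /K (bigD1 i) //= lerDl; apply: sumr_ge0 => j _; apply: divr_ge0.
exists (1 / (K + 1)); first by apply: divr_gt0; lra.
move=> s /andP[hs1 hs2] y H k; rewrite leNgt; apply/negP => yk.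
have hdK : (t1 - s) * (K + 1) < 1.
  by rewrite -ltr_pdivlMr; lra.
case: (arg_minP (fun i => y i / v i) (P:=predT) (i0:=k) isT) => m _ Hm.
set th := y m / v m in Hm.
have thk : th < 0.
  apply: le_lt_trans (Hm k isT) _; rewrite pmulr_llt0 //.
  by rewrite invr_gt0.
have thv : forall i, th * v i <= y i.
  by move=> i; rewrite -ler_pdivlMr //; apply: Hm.
pose d := t1 - s.
have d0 : 0 <= d by rewrite /d; lra.
pose c := - (d * th).
have Hz := HP (fun j => y j + c * u j).
have : 0 <= y m + c * u m.
  apply: Hz => i; rewrite Av_lin.
  have -> : Av u i = t1 * u i - v i by have := Hu i; lra.
  have F : d * (th * v i) <= d * y i by apply: ler_wpM2l => //; apply: thv.
  have := H i; rewrite /c /d in F *; nra.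
have ym : y m = th * v m by rewrite /th mulrVK // unitfE gt_eqF.
rewrite ym /c => h1.
have h2 : v m <= d * u m.
  nra.
have := Ki m; have := vp m; rewrite /d in h2 *; nra.
Qed.

Lemma L4 : (forall t, 1 <= t -> Ut t) -> Pt 1.
Proof.
move=> HU; apply: contrapT => N1.
pose S := [set t : R | 1 <= t /\ ~ Pt t].
have K0 : 0 <= Ksum by apply: sumr_ge0 => i _; apply: sumr_ge0.
have ubS : ubound S Ksum.
  move=> t [t1 Nt]; rewrite leNgt; apply/negP => Kt; apply: Nt.
  by apply: L1 => //; lra.
have hS : has_sup S by split; [exists 1; split | exists Ksum].
have t1ge : 1 <= sup S by apply: sup_upper_bound => //; split.
have Pgt : forall s, sup S < s -> Pt s.
  move=> s hs; apply: contrapT => Ns.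
  have : s <= sup S by apply: sup_upper_bound => //; split => //; lra.
  lra.
have Pt1 := @L2 (sup S) Pgt (HU _ t1ge).
have [eta eta0 Heta] := @L3 (sup S) ltac:(lra) (HU _ t1ge) Pt1.
have [e [e1 Ne] he] := sup_adherent eta0 hS.
apply: (Ne); apply: Heta; apply/andP; split => //.
have Se : S e by split.
exact: (sup_upper_bound hS Se).
Qed.
End LinAlg.
Section Spec.
Variables (R : realType) (n : nat) (A : 'M[R]_n).
Hypothesis A0 : forall i j, 0 <= A i j.
Local Notation toC := (real_complex R).
Local Open Scope complex_scope.

Lemma eig_bound (z : R[i]) :
  eigenvalue (map_mx toC A) z -> ComplexField.Normc.normc z <= @Ksum R n A.
Proof.
case/eigenvalueP => v Hv vn0.
have [j vj] : exists j, v 0 j != 0.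
  apply/existsP; move: vn0; apply: contraR; rewrite negb_exists => /forallP H.
  by apply/eqP/matrixP => i k; rewrite ord1 mxE; apply/eqP/negPn/H.
case: (arg_maxP (fun k => ComplexField.Normc.normc (v 0 k)) (P:=predT) (i0:=j) isT) => m _ Hm.
have nE : forall w : R[i], `|w| = (ComplexField.Normc.normc w)%:C by [].
have e1 : z * v 0 m = \sum_i v 0 i * (A i m)%:C.
  have := congr1 (fun M : 'M[R[i]]_(1,n) => M 0 m) Hv; rewrite !mxE => <-.
  by apply: eq_bigr => i _; rewrite mxE.
have nm : forall k, `|v 0 k| <= `|v 0 m|.
  by move=> k; rewrite !nE lecR; apply: Hm.
have vm0 : 0 < `|v 0 m|.
  apply: lt_le_trans (nm j); by rewrite normr_gt0.
have h1 : `|z| * `|v 0 m| <= `|v 0 m| * (\sum_i A i m)%:C.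
  rewrite -normrM e1 rmorph_sum big_distrr /=.
  apply: le_trans (ler_norm_sum _ _ _) _.
  apply: ler_sum => i _; rewrite normrM [`|(A i m)%:C|]ger0_norm ?ler0c //.
  by rewrite mulrC [X in _ <= X]mulrC; apply: ler_wpM2l; rewrite ?ler0c.
have h2 : `|z| <= (\sum_i A i m)%:C.
  by rewrite -(ler_pM2r vm0) [X in _ <= X]mulrC.
move: h2; rewrite nE lecR => h2; apply: le_trans h2 _.
rewrite /Ksum [X in _ <= X](exchange_big) /= [X in _ <= X](bigD1 m) //= lerDl.
by apply: sumr_ge0 => k _; apply: sumr_ge0.
Qed.

Lemma spec_U : spectral_radius A < 1 -> forall t, 1 <= t -> @Ut R n A t.
Proof.
move=> hs t t1.
case: (boolP ((A - t%:M) \in unitmx)) => hu.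
  move=> c.
  pose Y := invmx (A - t%:M) *m \col_k (- c k).
  have HY : (A - t%:M) *m Y = \col_k (- c k) by rewrite /Y mulmxA mulmxV // mul1mx.
  clearbody Y; exists (fun i => Y i 0) => i.
  have := congr1 (fun M : 'M[R]_(n,1) => M i 0) HY.
  rewrite mulmxBl mul_scalar_mx !mxE /Av => h.
  have -> : \sum_j A i j * Y j 0 = (A *m Y) i 0 by rewrite mxE.
  rewrite -[RHS]opprK -h mxE; lra.
exfalso.
have ev : eigenvalue A t.
  by rewrite /eigenvalue /eigenspace kermx_eq0 row_free_unit.
have evC : eigenvalue (map_mx toC A) (toC t) by rewrite eigenvalue_map.
have hsup : has_sup [set r : R | exists z : R[i],
         eigenvalue (map_mx (fun x : R => (x%:C)%C) A) z
         /\ r = ComplexField.Normc.normc z].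
  split; first by exists (ComplexField.Normc.normc (toC t)); exists (toC t).
  exists (@Ksum R n A) => r [z [hz ->]]; exact: eig_bound.
have : ComplexField.Normc.normc (toC t) <= spectral_radius A.
  by apply: (sup_upper_bound hsup); exists (toC t).
have -> : ComplexField.Normc.normc (toC t) = t.
  rewrite /= expr0n addr0 sqrtr_sqr ger0_norm //; lra.
lra.
Qed.
End Spec.
Lemma cvg_sumr (R : realType) (T : Type) (F : set_system T) (FF : Filter F)
  (N : nat) (f : 'I_N -> T -> R) (l : 'I_N -> R) :
  (forall i, f i x @[x --> F] --> l i) ->
  (\sum_i f i x) @[x --> F] --> \sum_i l i.
Proof. by move=> H; apply: cvg_big => //; exact: add_continuous. Qed.

Section FixPt.
Variables (V : finType) (E : {set V * V}) (R : realType).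
Variable p : 'I_#|E| -> R.
Hypothesis hp : forall b, 0 <= p b <= 1.

Definition Pd (a b : 'I_#|E|) := (edst b == esrc a) && (esrc b != edst a).

Lemma jacE a b : jac p a b = (Pd a b)%:R * p b.
Proof. by rewrite /jac mul_mx_diag !mxE. Qed.

Lemma fac_in y b : 0 <= y b <= 1 -> 0 <= 1 - p b + p b * y b <= 1.
Proof. by move: (hp b) => /andP[h1 h2] /andP[h3 h4]; apply/andP; split; nra. Qed.
Arguments fac_in {y b}.

Lemma F_in y : (forall b, 0 <= y b <= 1) -> forall a, 0 <= Fmap p y a <= 1.
Proof.
move=> hy a; apply/andP; split.
  by apply: prodr_ge0 => b _; case/andP: (fac_in (hy b)).
by apply: prodr_ile1 => b _; apply: fac_in.
Qed.

Arguments F_in {y}.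
Lemma F_mono y z : (forall b, 0 <= y b <= 1) -> (forall b, y b <= z b) ->
  forall a, Fmap p y a <= Fmap p z a.
Proof.
move=> hy hyz a; apply: ler_prod => b _.
case/andP: (fac_in (hy b)) => -> _ /=.
have := hyz b; have := hp b; move=> /andP[h1 h2] h3; nra.
Qed.

Arguments F_mono {y z}.
Lemma F_union y : (forall b, 0 <= y b <= 1) ->
  forall a, 1 - Fmap p y a <= \sum_b jac p a b * (1 - y b).
Proof.
move=> hy a.
have -> : \sum_b jac p a b * (1 - y b) =
          \sum_(b | Pd a b) (p b * (1 - y b)).
  rewrite [RHS]big_mkcond /=; apply: eq_bigr => b _; rewrite jacE.
  by case: (Pd a b); rewrite ?mul1r ?mul0r.
rewrite /Fmap.
pose K (x s : R) := 0 <= x <= 1 /\ 1 - x <= s.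
suff : K (\prod_(b < #|E| | Pd a b) (1 - p b + p b * y b))
         (\sum_(b | Pd a b) (p b * (1 - y b))) by case.
apply: (big_ind2 K).
- by rewrite /K; split; lra.
- move=> x1 x2 y1 y2 [/andP[h1 h2] h3] [/andP[h4 h5] h6].
  split; first by apply/andP; split; nra.
  nra.
- move=> b _; split; first exact: fac_in.
  lra.
Qed.

Arguments F_union {y}.
Definition yit k := iter k (Fmap p) (fun _ => 0).

Lemma yit_in k b : 0 <= yit k b <= 1.
Proof.
elim: k b => [|k IH] b /=; first by rewrite /yit /=; lra.
exact: (F_in IH b).
Qed.

Lemma yit_mono k b : yit k b <= yit k.+1 b.
Proof.
elim: k b => [|k IH] b.
  by rewrite /yit /=; case/andP: (F_in (fun b => yit_in 0 b) b).
exact: (F_mono (fun c => yit_in k c) (fun c => IH c) b).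
Qed.

Lemma yit_cvg b : (fun k => yit k b) @ \oo --> Qmp p b.
Proof.
have hnd : {homo (fun k => yit k b) : n m / (n <= m)%N >-> n <= m}.
  by apply/nondecreasing_seqP => k; apply: yit_mono.
have hub : has_ubound (range (fun k => yit k b)).
  by exists 1 => _ [k _ <-]; case/andP: (yit_in k b).
have cv := nondecreasing_cvgn hnd hub.
rewrite /Qmp -/(yit _) (cvg_lim (@Rhausdorff R) cv).
exact: cv.
Qed.

Lemma Q_in b : 0 <= Qmp p b <= 1.
Proof.
have cv := yit_cvg b.
have ic : cvg ((fun k => yit k b) @ \oo) by apply/cvg_ex; eexists; exact: cv.
rewrite -(cvg_lim (@Rhausdorff R) cv).
apply/andP; split.
  by apply: limr_ge => //; near=> k; case/andP: (yit_in k b).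
by apply: limr_le => //; near=> k; case/andP: (yit_in k b).
Unshelve. all: by end_near.
Qed.

Lemma yit_le_Q k b : yit k b <= Qmp p b.
Proof.
have cv := yit_cvg b.
have ic : cvg ((fun k => yit k b) @ \oo) by apply/cvg_ex; eexists; exact: cv.
have hnd : {homo (fun k => yit k b) : n m / (n <= m)%N >-> n <= m}.
  by apply/nondecreasing_seqP => j; apply: yit_mono.
rewrite -(cvg_lim (@Rhausdorff R) cv).
apply: limr_ge => //; near=> j; apply: hnd.
by near: j; exists k.
Unshelve. all: by end_near.
Qed.

Lemma Q_ineq a : 1 - Qmp p a <= \sum_b jac p a b * (1 - Qmp p b).
Proof.
have cv : (fun k => \sum_b jac p a b * (1 - yit k b)) @ \oo -->
          \sum_b jac p a b * (1 - Qmp p b).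
  apply: cvg_sumr => b; apply: cvgMl_tmp; apply: cvgB; first exact: cvg_cst.
  exact: yit_cvg.
rewrite -(cvg_lim (@Rhausdorff R) cv).
apply: limr_ge; first by apply/cvg_ex; eexists; exact: cv.
near=> k.
apply: le_trans (F_union (fun b => yit_in k b) a).
have := yit_mono k a; have : yit k.+1 a <= Qmp p a.
  exact: yit_le_Q.
rewrite /yit /=; lra.
Unshelve. all: by end_near.
Qed.
End FixPt.
Lemma kill (R : realType) (N : nat) (B : 'M[R]_N) (x v : 'I_N -> R) :
  (forall i j, 0 <= B i j) -> (forall a, 0 <= x a) ->
  (forall a, x a <= \sum_b B a b * x b) -> (forall a, 0 < v a) ->
  (forall a, \sum_b B a b * v b <= v a - 1/2) -> forall a, x a = 0.
Proof.
move=> B0 x0 hx v0 hv a; apply/eqP; rewrite eq_le x0 andbT leNgt; apply/negP => xa.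
case: (arg_maxP (fun i => x i / v i) (P:=predT) (i0:=a) isT) => m _ Hm.
set th := x m / v m in Hm.
have tha : 0 < th.
  apply: lt_le_trans (Hm a isT); by apply: divr_gt0.
have thv : forall b, x b <= th * v b.
  by move=> b; rewrite -ler_pdivrMr //; apply: Hm.
have h1 : \sum_b B m b * x b <= th * \sum_b B m b * v b.
  rewrite big_distrr /=; apply: ler_sum => b _.
  by rewrite mulrCA; apply: ler_wpM2l.
have xm : x m = th * v m by rewrite /th mulrVK // unitfE gt_eqF.
have := hx m; have := hv m; rewrite xm.
set s := \sum_b B m b * v b in h1 *; nra.
Qed.

Theorem lemma2 (V : finType) (E : {set V * V}) (R : realType)
  (p : R -> 'I_#|E| -> R) (lc : R) :
  (forall l, 0 <= l <= 1 -> forall a, 0 <= p l a <= 1) ->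
  (forall a, {within [set l : R | 0 <= l <= 1], continuous (fun l => p l a)}) ->
  0 <= lc < 1 ->
  (forall a, (fun l => Qmp (p l) a) @ within [set l : R | 0 <= l <= 1] (lc^')
               --> (1 : R)) ->
  (exists u : nat -> R,
     (forall n, 0 <= u n <= 1) /\ u @ \oo --> lc /\
     (forall n, Qmp (p (u n)) <> (fun _ => 1))) ->
  1 <= spectral_radius (jac (p lc)).
Proof.
move=> hp hc hlc _ [u [hu [ucv hQ]]].
rewrite leNgt; apply/negP => hs.
have lcD : 0 <= lc <= 1 by apply/andP; split; lra.
have jac0 : forall l, 0 <= l <= 1 -> forall i j, 0 <= jac (p l) i j.
  move=> l hl i j; rewrite jacE; apply: mulr_ge0; first by case: (Pd _ _).
  by case/andP: (hp l hl j).
have A0 := jac0 lc lcD.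
have HU := @spec_U R _ _ A0 hs.
have P1 := @L4 R _ _ A0 HU.
have [v Hv] := HU 1 (lexx _) (fun _ => 1).
have v0 : forall i, 0 <= v i by apply: P1 => i; have := Hv i; lra.
have v1 : forall i, 1 <= v i.
  move=> i; have := Hv i; have := @Av_ge0 R _ _ A0 v i v0; lra.
have pcv : forall b, (fun n => p (u n) b) @ \oo --> p lc b.
  move=> b.
  have h1 := (subspace_continuousP _ _).1 (hc b) lc lcD.
  have hu' : u @ \oo --> within [set l : R | 0 <= l <= 1] (nbhs lc).
    move=> P hP; exact: (filterS (fun k (h : 0 <= u k <= 1 -> P (u k)) => h (hu k)) (ucv _ hP)).
  exact: (cvg_comp _ _ hu' h1).
have scv : forall a, (fun n => \sum_b jac (p (u n)) a b * v b) @ \oo -->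
                     \sum_b jac (p lc) a b * v b.
  move=> a; apply: cvg_sumr => b; rewrite /=.
  under [X in X @ _ --> _]eq_fun do rewrite jacE.
  rewrite jacE; apply: cvgMr_tmp; apply: cvgMl_tmp; exact: pcv.
have ev : \forall n \near \oo, forall a,
    \sum_b jac (p (u n)) a b * v b <= v a - 1/2.
  apply: filter_forall => a.
  have := (cvgrPdist_lt _ _).1 (scv a) (1/2) ltac:(lra).
  apply: filterS => n hn.
  have ea : \sum_b jac (p lc) a b * v b = v a - 1.
    have := Hv a; rewrite /Av; lra.
  rewrite ea in hn.
  rewrite distrC in hn.
  have := ler_norm (\sum_b jac (p (u n)) a b * v b - (v a - 1)); lra.
case: ev => N _ HN.
have hN := HN N (leqnn N).
apply: (hQ N); apply: funext => a.
have := @kill R _ _ (fun b => 1 - Qmp (p (u N)) b) v (jac0 _ (hu N)).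
move=> /(_ _ _ _ hN a) h.
have hpN : forall b, 0 <= p (u N) b <= 1 by move=> b; apply: hp.
suff : 1 - Qmp (p (u N)) a = 0 by lra.
apply: h.
- by move=> b; case/andP: (@Q_in _ _ _ _ hpN b); lra.
- by move=> b; exact: (@Q_ineq _ _ _ _ hpN b).
- by move=> b; have := v1 b; lra.
Qed.
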